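(* Let $\mathcal{S}$ be a relational structure admitting an injective unary FA-presentation $(a^*,\phi)$, and let $R$ be a binary relation in the signature of $\mathcal{S}$. Let $R^*$ denote the reflexive and transitive closure of $R$. Then $\Lambda(R^*,\phi)=\{(u,v)\in a^*\times a^* : (u\phi,v\phi)\in R^*\}$ is regular. Hence $\mathcal{S}$ augmented by the relation $R^*$ is also unary FA-presentable.
   Context: For words $w_1,\dots,w_r$ over a finite alphabet $A$, $\mathrm{conv}(w_1,\dots,w_r)$ is the word over $(A\cup\{\$\})^r$ (with $\$\notin A$) whose $j$-th letter is the tuple of $j$-th letters of the $w_i$, shorter words being padded at the end with $\$$ up to the maximal length. A relation $X\subseteq (A^* )^r$ is regular if $\{\mathrm{conv}(w_1,\dots,w_r):(w_1,\dots,w_r)\in X\}$ is a regular language. An FA-presentation of a relational structure $\mathcal{S}=(S,R_1,\dots,R_n)$ is a pair $(L,\phi)$ with $L$ a regular language over a finite alphabet and $\phi:L\to S$ surjective such that for every relation $R\in\{=,R_1,\dots,R_n\}$ of arity $r$ the relation $\Lambda(R,\phi)=\{(w_1,\dots,w_r)\in L^r : R(w_1\phi,\dots,w_r\phi)\}$ is regular. It is unary if $L$ is over a one-letter alphabet $\{a\}$, and a structure is unary FA-presentable if it admits a unary FA-presentation. An injective unary FA-presentation $(a^*,\phi)$ is one with $L=a^*$ and $\phi$ injective (hence bijective). *)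

(* Defs.v *)
From Stdlib Require Import Relation_Operators.
From mathcomp Require Import all_boot.
Set Implicit Arguments. Unset Strict Implicit. Unset Printing Implicit Defensive.

Record dfa (Sigma : finType) := DFA {
  dfa_state : finType;
  dfa_start : dfa_state;
  dfa_final : pred dfa_state;
  dfa_trans : dfa_state -> Sigma -> dfa_state }.

Definition dfa_accepts (Sigma : finType) (M : dfa Sigma) (w : seq Sigma) : bool :=
  @dfa_final Sigma M (foldl (@dfa_trans Sigma M) (@dfa_start Sigma M) w).

Definition regular_lang (Sigma : finType) (L : seq Sigma -> Prop) : Prop :=
  exists M : dfa Sigma, forall w, L w <-> dfa_accepts M w.

(* The padded alphabet (A u {$})^r : None plays the role of the padding symbol $. *)
Definition conv_alph (A : finType) (r : nat) : finType := {ffun 'I_r -> option A}.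

Definition conv (A : finType) (r : nat) (ws : r.-tuple (seq A)) : seq (conv_alph A r) :=
  [seq [ffun k : 'I_r => nth None (map Some (tnth ws k)) j]
     | j <- iota 0 (\max_(k < r) size (tnth ws k))].

Definition regular_rel (A : finType) (r : nat) (X : r.-tuple (seq A) -> Prop) : Prop :=
  regular_lang (fun u : seq (conv_alph A r) => exists ws, X ws /\ u = conv ws).

Record signature := Signature { sym : finType; arity : sym -> nat }.

Definition relstruct (sig : signature) (S : Type) :=
  forall i : sym sig, (arity i).-tuple S -> Prop.

Definition Lambda (A : finType) (S : Type) (L : seq A -> Prop) (phi : seq A -> S)
  (r : nat) (R : r.-tuple S -> Prop) : r.-tuple (seq A) -> Prop :=
  fun ws => (forall k : 'I_r, L (tnth ws k)) /\ R (map_tuple phi ws).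

Definition eq_rel2 (S : Type) : 2.-tuple S -> Prop :=
  fun t => tnth t ord0 = tnth t (@Ordinal 2 1 isT).

(* (L, phi) is an FA-presentation of (S, rels); phi need only be meaningful on L. *)
Definition FA_presentation (A : finType) (sig : signature) (S : Type)
  (rels : relstruct sig S) (L : seq A -> Prop) (phi : seq A -> S) : Prop :=
  [/\ regular_lang L,
      (forall s : S, exists w, L w /\ phi w = s),
      regular_rel (Lambda L phi (@eq_rel2 S))
    & forall i : sym sig, regular_rel (Lambda L phi (rels i))].

Definition unary_FA_presentable (sig : signature) (S : Type) (rels : relstruct sig S) : Prop :=
  exists (A : finType) (L : seq A -> Prop) (phi : seq A -> S),
    #|A| = 1 /\ FA_presentation rels L phi.

Definition injective_unary_FA_presentation (A : finType) (sig : signature) (S : Type)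
  (rels : relstruct sig S) (phi : seq A -> S) : Prop :=
  [/\ #|A| = 1, FA_presentation rels (fun _ => True) phi & injective phi].

Definition binrel (sig : signature) (S : Type) (rels : relstruct sig S)
  (i : sym sig) (e : arity i = 2) : S -> S -> Prop :=
  fun x y => rels i (tcast (esym e) [tuple x; y]).

Definition rt_rel2 (S : Type) (R : S -> S -> Prop) : 2.-tuple S -> Prop :=
  fun t => clos_refl_trans S R (tnth t ord0) (tnth t (@Ordinal 2 1 isT)).

Definition aug_signature (sig : signature) : signature :=
  @Signature (option (sym sig))
    (fun o => match o with Some i => arity i | None => 2 end).

Definition aug_struct (sig : signature) (S : Type) (rels : relstruct sig S)
  (Q : 2.-tuple S -> Prop) : relstruct (aug_signature sig) S :=
  fun o => match o as o0 return (arity (s := aug_signature sig) o0).-tuple S -> Prop with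
           | Some i => rels i
           | None => Q
           end.

(* Main.v *)
Require Import Defs.
From Stdlib Require Import Lia Classical ClassicalEpsilon Relation_Operators Operators_Properties.
From mathcomp Require Import all_boot zify.
Set Implicit Arguments. Unset Strict Implicit. Unset Printing Implicit Defensive.


Lemma ex_min_prop (P : nat -> Prop) : (exists n, P n) -> exists n, P n /\ forall m, P m -> n <= m.
Proof.
move=> [n Hn]. elim: n {-2}n (leqnn n) Hn => [|k IH] n Hn Pn.
  exists n; split => // m _; move: Hn; rewrite leqn0 => /eqP ->; done.
case: (classic (exists m, m < n /\ P m)) => [[m [Hm Pm]]|H].
  by apply: (IH m) => //; lia.
exists n; split => // m Pm; case: (leqP n m) => // Hmn; exfalso; apply: H; by exists m.
Qed.

Lemma php (F : finType) (f : nat -> F) n : #|F| <= n -> exists i j, i < j <= n /\ f i = f j.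
Proof.
move=> HF. pose g := fun i : 'I_n.+1 => f i.
case: (classic (injective g)) => Hg.
  by have := leq_card _ Hg; rewrite card_ord; lia.
apply not_all_ex_not in Hg; destruct Hg as [i Hg].
apply not_all_ex_not in Hg; destruct Hg as [j Hg].
apply imply_to_and in Hg; destruct Hg as [Hij Hne].
have : val i <> val j by move=> E; apply: Hne; apply: val_inj.
move=> Hv; case: (ltngtP i j) => H.
- exists i, j; rewrite H /=; split; [by have := ltn_ord j; lia | exact Hij].
- exists j, i; rewrite H /=; split; [by have := ltn_ord i; lia | by rewrite /g in Hij].
- by [].
Qed.

Lemma ev1 (f : nat -> Prop) : (forall k, f k -> f k.+1) -> exists N, forall k, N <= k -> (f k <-> f N).
Proof.
move=> Hf. have mono : forall k m, f k -> f (k + m) by move=> k m Hk; elim: m => [|m IH]; rewrite ?addn0 ?addnS //; apply: Hf.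
case: (classic (exists k, f k)) => [[k0 Hk0]|H].
  exists k0 => k Hk; split => // _. by rewrite -(subnKC Hk); apply: mono.
exists 0 => k _; split => Hk; exfalso; apply: H; by eexists; eauto.
Qed.

Lemma unif (Pr : nat -> nat -> Prop) n : (forall i N N', N <= N' -> Pr i N -> Pr i N') ->
  (forall i, i < n -> exists N, Pr i N) -> exists N, forall i, i < n -> Pr i N.
Proof.
move=> Hup; elim: n => [|n IH] H; first by exists 0.
have [N1 H1] : exists N, forall i, i < n -> Pr i N by apply: IH => i Hi; apply: H; lia.
have [N2 H2] := H n (ltnSn n).
exists (maxn N1 N2) => i Hi. case: (ltngtP i n) => Hin.
- apply: Hup (H1 _ Hin); lia.
- lia.
- by rewrite Hin; apply: Hup H2; lia.
Qed.

Lemma grid (U : nat -> nat -> Prop) : (forall k l, U k l -> U k.+1 l) -> (forall k l, U k l -> U k l.+1) ->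
  exists N, forall k l, (N <= k -> (U k l <-> U k.+1 l)) /\ (N <= l -> (U k l <-> U k l.+1)).
Proof.
move=> Hmk Hml.
have monok : forall k m l, U k l -> U (k + m) l by move=> k m l H; elim: m => [|m IH]; rewrite ?addn0 ?addnS //; apply: Hmk.
have monol : forall k m l, U k l -> U k (l + m) by move=> k m l H; elim: m => [|m IH]; rewrite ?addn0 ?addnS //; apply: Hml.
have mono : forall k l k' l', k <= k' -> l <= l' -> U k l -> U k' l'.
  by move=> k l k' l' H1 H2 H; rewrite -(subnKC H1) -(subnKC H2); apply: monol; apply: monok.
case: (classic (exists k l, U k l)) => [Hex|Hno]; last first.
  exists 0 => k l; split => _; split => H; exfalso; apply: Hno; by do 2 eexists; eauto.
have [v [[l1 Hv] Hmin]] := ex_min_prop Hex.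
have Hrow : forall l, l1 <= l -> forall k, U k l <-> v <= k.
  move=> l Hl' k; split => H; first by apply: Hmin; exists l.
  exact: mono H Hl' Hv.
have [N1 HN1] : exists N, forall l, l < l1 -> (forall k, N <= k -> (U k l <-> U k.+1 l)).
  apply: unif.
    by move=> i N N' HN H k Hk; apply: H; lia.
  move=> l _. have [N HN] := @ev1 (fun k => U k l) (fun k => Hmk k l).
  exists N => k Hk'; rewrite (HN k Hk') (HN k.+1) //; lia.
exists (maxn N1 (maxn l1 v)) => k l; split => HN.
- case: (ltnP l l1) => Hll1; first by apply: HN1 => //; lia.
  by rewrite !Hrow //; split => _; lia.
- by rewrite !Hrow //; lia.
Qed.

Lemma mulS_shift a k p : a + k.+1 * p = (a + k * p) + p.
Proof. by rewrite mulSn; lia. Qed.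

Lemma decomp_res t p z : 0 < p -> t <= z -> exists i k, i < p /\ z = t + i + k * p.
Proof.
move=> Hp Hz. exists ((z - t) %% p), ((z - t) %/ p). rewrite ltn_pmod //; split => //.
rewrite -addnA [X in _ + X]addnC -divn_eq. lia.
Qed.

Lemma twoD (Y : nat -> nat -> Prop) t p : 0 < p ->
  (forall x d, t <= x -> Y x d -> Y (x + p) d) -> (forall x d, t <= d -> Y x d -> Y x (d + p)) ->
  exists T0, forall x d, (T0 <= x -> (Y x d <-> Y (x + p) d)) /\ (T0 <= d -> (Y x d <-> Y x (d + p))).
Proof.
move=> Hp A1 A2.
have [N1 HN1] : exists N, forall i, i < p -> forall j, j < p -> forall k l,
   (N <= k -> (Y (t + i + k * p) (t + j + l * p) <-> Y (t + i + k.+1 * p) (t + j + l * p))) /\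
   (N <= l -> (Y (t + i + k * p) (t + j + l * p) <-> Y (t + i + k * p) (t + j + l.+1 * p))).
  apply: unif; first by move=> i N N' HN H j Hj k l; have := H j Hj k l; split => ?; apply H0; lia.
  move=> i Hi. apply: unif; first by move=> j N N' HN H k l; have := H k l; split => ?; apply H0; lia.
  move=> j Hj. apply: (grid (U := fun k l => Y (t + i + k * p) (t + j + l * p))).
  + by move=> k l H; rewrite mulS_shift; apply: A1 => //; lia.
  + by move=> k l H; rewrite mulS_shift; apply: A2 => //; lia.
have [N2 HN2] : exists N, forall d, d < t -> forall i, i < p -> forall k, N <= k ->
   (Y (t + i + k * p) d <-> Y (t + i + k.+1 * p) d).
  apply: unif; first by move=> d N N' HN H i Hi k Hk; apply: H => //; lia.
  move=> d _. apply: unif; first by move=> i N N' HN H k Hk; apply: H => //; lia.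
  move=> i _. have [N HN] := @ev1 (fun k => Y (t + i + k * p) d) (fun k H => ltac:(by cbv beta in *; rewrite mulS_shift; apply: A1 => //; lia)).
  exists N => k Hk; rewrite (HN k Hk) (HN k.+1) //; lia.
have [N3 HN3] : exists N, forall x, x < t -> forall j, j < p -> forall l, N <= l ->
   (Y x (t + j + l * p) <-> Y x (t + j + l.+1 * p)).
  apply: unif; first by move=> d N N' HN H i Hi k Hk; apply: H => //; lia.
  move=> x _. apply: unif; first by move=> i N N' HN H k Hk; apply: H => //; lia.
  move=> j _. have [N HN] := @ev1 (fun l => Y x (t + j + l * p)) (fun k H => ltac:(by cbv beta in *; rewrite mulS_shift; apply: A2 => //; lia)).
  exists N => k Hk; rewrite (HN k Hk) (HN k.+1) //; lia.
set N := maxn N1 (maxn N2 N3).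
exists (t + N * p + p) => x d; split => Hx.
- have Htx : t <= x by lia.
  have [i [k [Hi Ex]]] := decomp_res Hp Htx.
  have Hk : N <= k.
    case: (leqP N k) => // Hk; exfalso.
    have : k.+1 * p <= N * p by rewrite leq_mul2r Hk orbT.
    rewrite mulSn; lia.
  have -> : x + p = t + i + k.+1 * p by rewrite Ex mulSn; lia.
  rewrite Ex. case: (ltnP d t) => Hd.
    by apply: HN2 => //; lia.
  have [j [l [Hj Ed]]] := decomp_res Hp Hd. rewrite Ed. by apply: (HN1 i Hi j Hj k l).1; lia.
- have Htd : t <= d by lia.
  have [j [l [Hj Ed]]] := decomp_res Hp Htd.
  have Hl : N <= l.
    case: (leqP N l) => // Hl; exfalso.
    have : l.+1 * p <= N * p by rewrite leq_mul2r Hl orbT.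
    rewrite mulSn; lia.
  have -> : d + p = t + j + l.+1 * p by rewrite Ed mulSn; lia.
  rewrite Ed. case: (ltnP x t) => Hxt.
    by apply: HN3 => //; lia.
  have [i [k [Hi Ex]]] := decomp_res Hp Hxt. rewrite Ex. by apply: (HN1 i Hi j Hj k l).2; lia.
Qed.

Definition good (X : nat -> nat -> Prop) T0 p :=
  [/\ forall x y, T0 <= x -> T0 <= y -> (X x y <-> X (x + p) (y + p)),
      forall x y, x + T0 <= y -> (X x y <-> X x (y + p))
    & forall x y, y + T0 <= x -> (X x y <-> X (x + p) y)].

Lemma mono_good (X : nat -> nat -> Prop) t p : 0 < p ->
  (forall x y, t <= x -> t <= y -> X x y -> X (x + p) (y + p)) ->
  (forall x y, x + t <= y -> X x y -> X x (y + p)) ->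
  (forall x y, y + t <= x -> X x y -> X (x + p) y) ->
  exists T0, good X T0 p.
Proof.
move=> Hp M1 M2 M3.
have [T1 H1] := @twoD (fun x d => X x (x + d)) t p Hp
   (fun x d Hx H => ltac:(by cbv beta in *; rewrite -addnA [p + d]addnC addnA; apply: M1 => //; lia))
   (fun x d Hd H => ltac:(by cbv beta in *; rewrite addnA; apply: M2 => //; lia)).
have [T2 H2] := @twoD (fun y d => X (y + d) y) t p Hp
   (fun y d Hy H => ltac:(by cbv beta in *; rewrite -addnA [p + d]addnC addnA; apply: M1 => //; lia))
   (fun y d Hd H => ltac:(by cbv beta in *; rewrite addnA; apply: M3 => //; lia)).
exists (maxn T1 T2); split.
- move=> x y Hx Hy. case: (leqP x y) => Hxy.
  + have E := (H1 x (y - x)).1 (_ : T1 <= x). rewrite /= in E. have Ey : x + (y - x) = y by lia.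
    have Ey' : x + p + (y - x) = y + p by lia. rewrite Ey Ey' in E. apply: E; lia.
  + have E := (H2 y (x - y)).1 (_ : T2 <= y). rewrite /= in E. have Ey : y + (x - y) = x by lia.
    have Ey' : y + p + (x - y) = x + p by lia. rewrite Ey Ey' in E. apply: E; lia.
- move=> x y Hxy. have E := (H1 x (y - x)).2 (_ : T1 <= y - x). rewrite /= in E.
  have Ey : x + (y - x) = y by lia. have Ey' : x + (y - x + p) = y + p by lia.
  rewrite Ey Ey' in E. apply: E; lia.
- move=> x y Hxy. have E := (H2 y (x - y)).2 (_ : T2 <= x - y). rewrite /= in E.
  have Ey : y + (x - y) = x by lia. have Ey' : y + (x - y + p) = x + p by lia.
  rewrite Ey Ey' in E. apply: E; lia.
Qed.


Definition Rc (R : nat -> nat -> Prop) T x y := T <= x /\ T <= y /\ R x y.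
Definition Cr R T := clos_refl_trans nat (Rc R T).
Definition HH1 (R : nat -> nat -> Prop) T P := forall x y, T <= x -> T <= y -> R x y -> R (x + P) (y + P).
Definition HH2 (R : nat -> nat -> Prop) T P :=
  forall a b b', a + T <= b -> a + T <= b' -> b %% P = b' %% P -> R a b -> R a b'.

Lemma Cr_trans R T x y z : Cr R T x y -> Cr R T y z -> Cr R T x z.
Proof. by move=> H1 H2; apply: rt_trans H1 H2. Qed.

Lemma Cr_step R T x y : Rc R T x y -> Cr R T x y.
Proof. by move=> H; apply: rt_step. Qed.

Lemma Cr_shift R T P : HH1 R T P -> forall m x y, Cr R T x y -> Cr R T (x + m * P) (y + m * P).
Proof.
move=> H1 m x y; elim => [a b [Ha [Hb Hab]]| a | a b c _ IH1 _ IH2].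
- apply: rt_step; split; [lia|split; [lia|]].
  elim: m => [|m IH]; first by rewrite !mul0n !addn0.
  rewrite !mulS_shift; apply: H1 => //; lia.
- exact: rt_refl.
- exact: rt_trans IH1 IH2.
Qed.

Lemma cross R T u y : Cr R T u y -> forall L, u < L -> L <= y ->
  exists a b, [/\ Cr R T u a, a < L, L <= b, Rc R T a b & Cr R T b y].
Proof.
move=> /clos_rt_rt1n_iff H. elim: H => [x|x w z Hxw Hwz IH] L H1 H2; first lia.
case: (leqP L w) => Hw.
- exists x, w; split => //; [exact: rt_refl | exact/clos_rt_rt1n_iff].
- have [a [b [Ha1 Ha2 Ha3 Ha4 Ha5]]] := IH L Hw H2.
  exists a, b; split => //. exact: rt_trans (rt_step _ _ _ _ Hxw) Ha1.
Qed.

Lemma chain R T P n : 0 < P -> forall u y L, Cr R T u y -> u < L -> L + n * P <= y ->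
  exists a b : nat -> nat, forall i, i <= n -> [/\ a i < L + i * P, L + i * P <= b i, Rc R T (a i) (b i),
     Cr R T u (a i) & Cr R T (b i) y] /\
     (forall j, i < j -> j <= n -> (a i = a j /\ b i = b j) \/ Cr R T (b i) (a j)).
Proof.
move=> Hp. elim/ltn_ind: n => n IH u y L Huy HuL HLy.
have [a0 [b0 [Ha1 Ha2 Ha3 Ha4 Ha5]]] := cross Huy HuL (leq_trans (leq_addr _ _) HLy).
set k := (b0 - L) %/ P.
have Hk1 := leq_divM (b0 - L) P. have Hk2 := ltn_ceil (b0 - L) Hp. rewrite -/k in Hk1 Hk2.
case: (leqP n k) => Hnk.
  exists (fun _ => a0), (fun _ => b0) => i Hi; split; [split => //; try lia|].
  have : i * P <= k * P by rewrite leq_mul2r (leq_trans Hi Hnk) orbT.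
  lia.
  by move=> j _ _; left.
have E0 : k.+1 * P + (n - k.+1) * P = n * P by rewrite -mulnDl; congr (_ * _); lia.
have [a' [b' H']] := IH (n - k.+1) (ltac:(lia)) b0 y (L + k.+1 * P) Ha5 (ltac:(lia)) (ltac:(lia)).
exists (fun i => if i <= k then a0 else a' (i - k.+1)), (fun i => if i <= k then b0 else b' (i - k.+1)).
move=> i Hi /=. case: (leqP i k) => Hik.
- idtac. have : i * P <= k * P by rewrite leq_mul2r Hik orbT.
  move=> HiP. split; first by split => //; try lia.
  move=> j Hij Hjn. case: (leqP j k) => Hjk; first by left.
  right. have [[_ _ _ H4 _] _] := H' (j - k.+1) (ltac:(lia)). exact H4.
- have Hik' : (i <= k) = false by lia.
  have E : L + k.+1 * P + (i - k.+1) * P = L + i * P.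
    rewrite -addnA -mulnDl; congr (_ + _ * _); lia.
  have [[H1 H2 H3 H4 H5] H6] := H' (i - k.+1) (ltac:(lia)). rewrite E in H1 H2.
  split; first split => //.
  + exact: Cr_trans Ha1 (Cr_trans (Cr_step Ha4) H4).
  + move=> j Hij Hjn. have Hjk : ~~ (j <= k) by lia. rewrite (negbTE Hjk).
    apply: H6; lia.
Qed.

Lemma jump R T P : HH2 R T P -> forall ai bi aj bj Li Lj,
  ai < Li -> Li <= bi -> aj < Lj -> Lj <= bj -> Li <= Lj -> R aj bj ->
  minn (Li - ai) T = minn (Lj - aj) T -> minn (bi - Li) T = minn (bj - Lj) T ->
  (bi - Li) %% P = (bj - Lj) %% P -> R aj (bi + (Lj - Li)).
Proof.
move=> H2 ai bi aj bj Li Lj h1 h2 h3 h4 h5 HR E1 E2 E3.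
have Hmod : bj %% P = (bi + (Lj - Li)) %% P.
  have -> : bj = (bj - Lj) + Lj by clear E3; lia.
  have -> : bi + (Lj - Li) = (bi - Li) + Lj by clear E3; lia.
  by rewrite -modnDml -E3 modnDml.
clear E3.
case: (ltnP (Lj - aj) T) => c1; case: (ltnP (bj - Lj) T) => c2.
- have -> : bi + (Lj - Li) = bj by clear Hmod; lia. done.
all: apply: (H2 aj bj _ _ _ Hmod HR); clear Hmod; lia.
Qed.

Lemma Rc_Cr R T x y : Rc R T x y -> Cr R T x y.
Proof. exact: Cr_step. Qed.

Lemma modn_addmul b k P : (b + k * P) %% P = b %% P.
Proof. by rewrite addnC modnMDl. Qed.

Lemma insertion R T P : 0 < P -> HH1 R T P -> HH2 R T P -> forall u y, Cr R T u y ->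
  u + 1 + (T.+1 * T.+1 * P.+1) * P <= y ->
  forall m, Cr R T u (y + m * ((T.+1 * T.+1 * P.+1)`! * P)).
Proof.
move=> Hp H1 H2 u y Huy.
set K := T.+1 * T.+1 * P.+1 => HKy m.
have [a [b Hc]] := chain (n := K) Hp Huy (ltnSn u) (ltac:(rewrite addn1 in HKy; exact HKy)).
pose f := fun i => ((inord (minn (u.+1 + i * P - a i) T) : 'I_T.+1),
                    (inord (minn (b i - (u.+1 + i * P)) T) : 'I_T.+1),
                    (inord ((b i - (u.+1 + i * P)) %% P) : 'I_P.+1)).
have [i [j [Hij Hf]]] := @php _ f K (ltac:(by rewrite !card_prod !card_ord)).
case: Hf => E1 E2 E3.
have E1' := congr1 (@nat_of_ord _) E1. have E2' := congr1 (@nat_of_ord _) E2.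
have E3' := congr1 (@nat_of_ord _) E3.
rewrite !inordK ?ltnS ?geq_minr // in E1' E2'.
rewrite !inordK in E3'; try by apply: ltnW; apply: ltn_pmod.
have Hi : i <= K by lia.
have Hj : j <= K by lia.
have [[ai1 ai2 ai3 ai4 ai5] ai6] := Hc i Hi.
have [[aj1 aj2 aj3 aj4 aj5] _] := Hc j Hj.
have Hd : u.+1 + j * P - (u.+1 + i * P) = (j - i) * P by rewrite mulnBl; lia.
set d := (j - i) * P.
have key : forall m, Cr R T u (b i + m * d).
  case: (ai6 j (ltac:(lia)) Hj) => [[Ea Eb]|Hl].
  - have HiT : T <= u.+1 + i * P - a i.
      have : u.+1 + i * P < u.+1 + j * P by rewrite ltn_add2l ltn_mul2r Hp; lia.
      move=> Hlt. rewrite Ea in E1'. clear E2' E3'. lia.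
    move=> m0. apply: Cr_trans ai4 (Rc_Cr _).
    case: ai3 => r1 [r2 r3]. split => //; split; first lia.
    apply: (H2 (a i) (b i)) => //.
    + rewrite Eb. clear E2' E3'. lia.
    + clear E2' E3'. lia.
    + by rewrite /d mulnA modn_addmul.
  - have J := jump H2 ai1 ai2 aj1 aj2 (ltac:(rewrite leq_add2l leq_mul2r; lia)) aj3.2.2 E1' E2' E3'.
    rewrite Hd -/d in J.
    have Cstep : Cr R T (b i) (b i + d).
      apply: Cr_trans Hl (Rc_Cr _). split; first by case: aj3.
      split; last exact J. case: ai3 => _ [? _]; lia.
    elim => [|m0 IH]; first by rewrite mul0n addn0; apply: Cr_trans ai4 (Rc_Cr ai3).
    apply: Cr_trans IH _. have := Cr_shift H1 (m0 * (j - i)) Cstep.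
    rewrite -mulnA -/d. by rewrite mulSn addnA; apply.
have Hdv : (j - i) %| K`! by apply: dvdn_fact; lia.
case/dvdnP: Hdv => q Hq.
have -> : y + m * (K`! * P) = y + (m * q) * d by rewrite Hq /d !mulnA.
apply: Cr_trans (key (m * q)) _.
have := Cr_shift H1 (m * q * (j - i)) ai5. by rewrite /d !mulnA.
Qed.


Definition trR (R : nat -> nat -> Prop) := fun x y => R y x.

Lemma Cr_tr R T x y : Cr (trR R) T x y -> Cr R T y x.
Proof.
elim => [a b [h1 [h2 h3]]|a|a b c _ IH1 _ IH2].
- by apply: rt_step; split => //; split.
- exact: rt_refl.
- exact: rt_trans IH2 IH1.
Qed.

Lemma Cr_tr' R T x y : Cr R T y x -> Cr (trR R) T x y.
Proof.
elim => [a b [h1 [h2 h3]]|a|a b c _ IH1 _ IH2].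
- by apply: rt_step; split => //; split.
- exact: rt_refl.
- exact: rt_trans IH2 IH1.
Qed.

Lemma good_iter_a (X : nat -> nat -> Prop) T P : good X T P -> forall m x y, T <= x -> T <= y ->
  (X x y <-> X (x + m * P) (y + m * P)).
Proof.
case=> Ha _ _ m x y Hx Hy. elim: m => [|m IH]; first by rewrite !mul0n !addn0.
rewrite IH !mulS_shift. apply: Ha; lia.
Qed.

Lemma good_iter_b (X : nat -> nat -> Prop) T P : good X T P -> forall m x y, x + T <= y ->
  (X x y <-> X x (y + m * P)).
Proof.
case=> _ Hb _ m x y Hxy. elim: m => [|m IH]; first by rewrite !mul0n !addn0.
rewrite IH !mulS_shift. apply: Hb; lia.
Qed.

Lemma good_iter_c (X : nat -> nat -> Prop) T P : good X T P -> forall m x y, y + T <= x ->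
  (X x y <-> X (x + m * P) y).
Proof.
case=> _ _ Hc m x y Hxy. elim: m => [|m IH]; first by rewrite !mul0n !addn0.
rewrite IH !mulS_shift. apply: Hc; lia.
Qed.

Lemma mod_eq_split b b' P : b <= b' -> b %% P = b' %% P -> exists q, b' = b + q * P.
Proof.
move=> Hbb E. have : P %| b' - b by rewrite -eqn_mod_dvd //; apply/eqP; rewrite E.
case/dvdnP => q Hq. exists q. clear E. lia.
Qed.

Lemma good_HH1 R T P : good R T P -> HH1 R T P.
Proof. by case=> Ha _ _ x y Hx Hy H; exact: ((Ha x y Hx Hy).1 H). Qed.

Lemma good_HH1t R T P : good R T P -> HH1 (trR R) T P.
Proof. by case=> Ha _ _ x y Hx Hy H; exact: ((Ha y x Hy Hx).1 H). Qed.

Lemma good_HH2 R T P : good R T P -> HH2 R T P.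
Proof.
move=> G a b b' H1 H2 E HR. case: (leqP b b') => Hbb.
- have [q Eq] := mod_eq_split Hbb E. rewrite Eq. exact: ((good_iter_b G q H1).1 HR).
- have [q Eq] := mod_eq_split (ltnW Hbb) (esym E). rewrite Eq in HR. exact: ((good_iter_b G q H2).2 HR).
Qed.

Lemma good_HH2t R T P : good R T P -> HH2 (trR R) T P.
Proof.
move=> G a b b' H1 H2 E HR. rewrite /trR in HR *. case: (leqP b b') => Hbb.
- have [q Eq] := mod_eq_split Hbb E. rewrite Eq. exact: ((good_iter_c G q H1).1 HR).
- have [q Eq] := mod_eq_split (ltnW Hbb) (esym E). rewrite Eq in HR. exact: ((good_iter_c G q H2).2 HR).
Qed.

Definition Qr (R : nat -> nat -> Prop) := clos_refl_trans nat R.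

Lemma Cr_Q R T x y : Cr R T x y -> Qr R x y.
Proof.
elim => [a b [_ [_ h]]|a|a b c _ IH1 _ IH2]; [exact: rt_step|exact: rt_refl|exact: rt_trans IH1 IH2].
Qed.

Lemma last_small R T x y : Qr R x y -> T <= y ->
  (T <= x /\ Cr R T x y) \/ exists s z, [/\ s < T, Qr R x s, R s z, T <= z & Cr R T z y].
Proof.
move=> /clos_rt_rt1n_iff H. elim: H => [a|a w c Haw Hwc IH] Hy.
- by left; split => //; exact: rt_refl.
- case: (IH Hy) => [[Hw Cw]|[s [z [h1 h2 h3 h4 h5]]]].
  + case: (leqP T a) => Ha.
    * left; split => //. apply: rt_trans (rt_step _ _ _ _ _) Cw. by split.
    * right; exists a, w; split => //; exact: rt_refl.
  + right; exists s, z; split => //. exact: rt_trans (rt_step _ _ _ _ Haw) h2.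
Qed.

Lemma first_small R T x y : Qr R x y -> T <= x ->
  (T <= y /\ Cr R T x y) \/ exists z s, [/\ T <= z, Cr R T x z, R z s, s < T & Qr R s y].
Proof.
move=> /clos_rt_rtn1_iff H. elim: H => [|w c Hwc Hxw IH] Hx.
- by left; split => //; exact: rt_refl.
- case: (IH Hx) => [[Hw Cw]|[z [s [h1 h2 h3 h4 h5]]]].
  + case: (leqP T c) => Hc.
    * left; split => //. apply: rt_trans Cw (rt_step _ _ _ _ _). by split.
    * right; exists w, c; split => //; exact: rt_refl.
  + right; exists z, s; split => //. exact: rt_trans h5 (rt_step _ _ _ _ Hwc).
Qed.

Lemma Q_good R T P : 0 < P -> good R T P -> exists T0 P0, 0 < P0 /\ good (Qr R) T0 P0.
Proof.
move=> Hp G.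
set K := T.+1 * T.+1 * P.+1. set P' := K`! * P.
have HP' : 0 < P' by rewrite /P' muln_gt0 fact_gt0.
have G1 := good_HH1 G. have G2 := good_HH2 G.
have G1t := good_HH1t G. have G2t := good_HH2t G.
have InsU : forall u y, Cr R T u y -> u + 1 + K * P <= y -> Cr R T u (y + P').
  move=> u y H1 H2. have := insertion Hp G1 G2 H1 H2 1. by rewrite mul1n.
have InsD : forall u y, Cr R T y u -> u + 1 + K * P <= y -> Cr R T (y + P') u.
  move=> u y H1 H2. apply: Cr_tr. have := insertion Hp G1t G2t (Cr_tr' H1) H2 1. by rewrite mul1n.
set D := 2 * T + 1 + K * P.
have F2 : forall s z y, s < T -> R s z -> T <= z -> Cr R T z y -> D <= y -> Qr R s (y + P').
  move=> s z y Hs Hsz Hz Czy Hy. case: (leqP (s + T) z) => Hsz'.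
  - apply: rt_trans (rt_step _ _ _ _ ((good_iter_b G (K`!) Hsz').1 Hsz)) _.
    apply: (@Cr_Q _ T). rewrite /P'. move: (Cr_shift G1 (K`!) Czy); apply.
  - apply: rt_trans (rt_step _ _ _ _ Hsz) _. apply: (@Cr_Q _ T). apply: InsU Czy _. rewrite /D in Hy. lia.
have F3 : forall x z s, s < T -> T <= z -> Cr R T x z -> R z s -> D <= x -> Qr R (x + P') s.
  move=> x z s Hs Hz Cxz Hzs Hx. case: (leqP (s + T) z) => Hsz'.
  - apply: rt_trans _ (rt_step _ _ _ _ ((good_iter_c G (K`!) Hsz').1 Hzs)).
    apply: (@Cr_Q _ T). move: (Cr_shift G1 (K`!) Cxz); apply.
  - apply: rt_trans _ (rt_step _ _ _ _ Hzs). apply: (@Cr_Q _ T). apply: InsD Cxz _. rewrite /D in Hx. lia.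
have M2 : forall x y, x + D <= y -> Qr R x y -> Qr R x (y + P').
  move=> x y Hxy Q. have HTy : T <= y by rewrite /D in Hxy; lia.
  case: (last_small Q HTy) => [[HTx C]|[s [z [h1 h2 h3 h4 h5]]]].
  - apply: (@Cr_Q _ T). apply: InsU C _. rewrite /D in Hxy; lia.
  - apply: rt_trans h2 _. apply: F2 h3 h4 h5 _ => //. lia.
have M3 : forall x y, y + D <= x -> Qr R x y -> Qr R (x + P') y.
  move=> x y Hxy Q. have HTx : T <= x by rewrite /D in Hxy; lia.
  case: (first_small Q HTx) => [[HTy C]|[z [s [h1 h2 h3 h4 h5]]]].
  - apply: (@Cr_Q _ T). apply: InsD C _. rewrite /D in Hxy; lia.
  - apply: rt_trans _ h5. apply: F3 h1 h2 h3 _ => //. lia.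
have M1 : forall x y, T + D <= x -> T + D <= y -> Qr R x y -> Qr R (x + P') (y + P').
  move=> x y Hx Hy Q. have HTx : T <= x by lia.
  case: (first_small Q HTx) => [[HTy C]|[z [s [h1 h2 h3 h4 h5]]]].
  - apply: (@Cr_Q _ T); move: (Cr_shift G1 (K`!) C); apply.
  - apply: rt_trans (F3 _ _ _ h4 h1 h2 h3 _) (M2 _ _ _ h5); lia.
have [T0 HT0] := @mono_good (Qr R) (T + D) P' HP' M1
  (fun x y H Q => M2 x y (ltac:(lia)) Q)
  (fun x y H Q => M3 x y (ltac:(lia)) Q).
by exists T0, P'.
Qed.


Lemma iter_period (Q : finType) (f : Q -> Q) q n : #|Q| <= n -> iter (n + #|Q|`!) f q = iter n f q.
Proof.
move=> Hn. have [i [j [Hij E]]] := @php Q (fun k => iter k f q) #|Q| (leqnn _).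
have step : forall m, i <= m -> iter (m + (j - i)) f q = iter m f q.
  move=> m Hm. have -> : m + (j - i) = (m - i) + j by lia.
  rewrite iterD -E -iterD. congr iter. lia.
have per : forall k m, i <= m -> iter (m + k * (j - i)) f q = iter m f q.
  elim => [|k IH] m Hm; first by rewrite mul0n addn0.
  have -> : m + k.+1 * (j - i) = (m + k * (j - i)) + (j - i) by rewrite mulSn; lia.
  rewrite step; [exact: IH| lia].
have : (j - i) %| #|Q|`! by apply: dvdn_fact; lia.
case/dvdnP => c ->. apply: per. lia.
Qed.

Definition lt2 (A : finType) (a : A) (b0 b1 : bool) : conv_alph A 2 :=
  [ffun k : 'I_2 => if (if val k == 0 then b0 else b1) then Some a else None].

Definition conv2 (A : finType) (a : A) m n := conv [tuple nseq m a; nseq n a].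

Definition wmn (A : finType) (a : A) m n :=
  nseq (minn m n) (lt2 a true true) ++ nseq (m - n) (lt2 a true false) ++ nseq (n - m) (lt2 a false true).

Lemma size_conv2 (A : finType) (a : A) m n : size (conv2 a m n) = maxn m n.
Proof.
rewrite /conv2 /conv size_map size_iota big_ord_recl big_ord_recl big_ord0 /=.
rewrite !(tnth_nth [::]) /= !size_nseq. lia.
Qed.

Lemma nth_conv2 (A : finType) (a : A) m n j : j < maxn m n ->
  nth (lt2 a false false) (conv2 a m n) j = lt2 a (j < m) (j < n).
Proof.
move=> Hj. have Hs := size_conv2 a m n.
rewrite /conv2 /conv in Hs *. rewrite (nth_map 0); last by rewrite size_map in Hs; rewrite Hs.
rewrite nth_iota; last by rewrite size_map size_iota in Hs; rewrite Hs.
apply/ffunP => k; rewrite !ffunE add0n.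
case: k => [[|[|//]] Hk] /=; rewrite (tnth_nth [::]) /= map_nseq nth_nseq //.
Qed.

Lemma nth_wmn (A : finType) (a : A) m n j : j < maxn m n ->
  nth (lt2 a false false) (wmn a m n) j = lt2 a (j < m) (j < n).
Proof.
move=> Hj. rewrite /wmn !nth_cat !size_nseq !nth_nseq.
case: (ltnP j (minn m n)) => H1.
  have h1 : j < m by lia. have h2 : j < n by lia. by rewrite h1 h2.
case: (ltnP (j - minn m n) (m - n)) => H2.
  have h1 : j < m by lia. have h2 : (j < n) = false by lia. by rewrite h1 h2.
case: (ltnP (j - minn m n - (m - n)) (n - m)) => H3.
  have h1 : (j < m) = false by lia. have h2 : j < n by lia. by rewrite h1 h2.
lia.
Qed.

Lemma conv2E (A : finType) (a : A) m n : conv2 a m n = wmn a m n.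
Proof.
apply: (@eq_from_nth _ (lt2 a false false)).
  rewrite size_conv2 /wmn !size_cat !size_nseq; lia.
move=> j; rewrite size_conv2 => Hj. by rewrite nth_conv2 // nth_wmn.
Qed.

Definition o1 : 'I_2 := @Ordinal 2 1 isT.
Definition lapp (A : finType) (l : conv_alph A 2) (k : 'I_2) : option A := (l : {ffun 'I_2 -> option A}) k.

Lemma letter_ex (A : finType) (a : A) (HA : forall x : A, x = a) (l : conv_alph A 2) :
  exists b0 b1, l = lt2 a b0 b1.
Proof.
exists (lapp l ord0 != None), (lapp l o1 != None).
apply/ffunP => k; rewrite ffunE. case: k => [[|[|//]] Hk] /=.
- have -> : Ordinal Hk = ord0 by apply: val_inj.
  rewrite /lapp. case: (fun_of_fin l ord0) => [x|] //=; by rewrite (HA x).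
- have -> : Ordinal Hk = o1 by apply: val_inj.
  rewrite /lapp. case: (fun_of_fin l o1) => [x|] //=; by rewrite (HA x).
Qed.

Definition step (A : finType) (s : option (nat * nat * nat)) (l : conv_alph A 2) : option (nat * nat * nat) :=
  let b0 := lapp l ord0 != None in let b1 := lapp l o1 != None in
  match s with
  | Some (0, c, _) => if b0 && b1 then Some (0, c.+1, 0) else if b0 then Some (1, c, 1)
                      else if b1 then Some (2, c, 1) else None
  | Some (1, c, d) => if b0 && ~~ b1 then Some (1, c, d.+1) else None
  | Some (2, c, d) => if ~~ b0 && b1 then Some (2, c, d.+1) else None
  | _ => None
  end.

Definition pstate (A : finType) (u : seq (conv_alph A 2)) := foldl (@step A) (Some (0, 0, 0)) u.

Definition code (m n : nat) : nat * nat * nat :=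
  if m == n then (0, m, 0) else if n < m then (1, n, m - n) else (2, m, n - m).

Definition mn (t : nat * nat * nat) : nat * nat :=
  let '(ph, c, d) := t in if ph == 0 then (c, c) else if ph == 1 then (c + d, c) else (c, c + d).

Lemma mn_code m n : mn (code m n) = (m, n).
Proof.
rewrite /code. case: (ltngtP m n) => H /=.
- congr pair; lia.
- congr pair; lia.
- by rewrite H.
Qed.

Lemma foldl_nseq (T R : Type) (f : R -> T -> R) s k x : foldl f s (nseq k x) = iter k (fun q => f q x) s.
Proof. elim: k s => [|k IH] s //=. rewrite IH. exact: (esym (iterSr k (f^~ x) s)). Qed.

Lemma step_aa (A : finType) (a : A) c d : step (Some (0, c, d)) (lt2 a true true) = Some (0, c.+1, 0).
Proof. by rewrite /step /lapp !ffunE. Qed.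
Lemma step_a0 (A : finType) (a : A) c d : step (Some (0, c, d)) (lt2 a true false) = Some (1, c, 1).
Proof. by rewrite /step /lapp !ffunE. Qed.
Lemma step_0a (A : finType) (a : A) c d : step (Some (0, c, d)) (lt2 a false true) = Some (2, c, 1).
Proof. by rewrite /step /lapp !ffunE. Qed.
Lemma step_1 (A : finType) (a : A) c d : step (Some (1, c, d)) (lt2 a true false) = Some (1, c, d.+1).
Proof. by rewrite /step /lapp !ffunE. Qed.
Lemma step_2 (A : finType) (a : A) c d : step (Some (2, c, d)) (lt2 a false true) = Some (2, c, d.+1).
Proof. by rewrite /step /lapp !ffunE. Qed.

Lemma pstate_conv2 (A : finType) (a : A) m n : pstate (conv2 a m n) = Some (code m n).
Proof.
rewrite conv2E /wmn /pstate !foldl_cat !foldl_nseq.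
have H0 : forall k c, iter k (fun q => step q (lt2 a true true)) (Some (0, c, 0)) = Some (0, c + k, 0).
  elim => [|k IH] c; first by rewrite addn0.
  by rewrite iterS IH step_aa addnS.
have H1 : forall k c d, iter k (fun q => step q (lt2 a true false)) (Some (1, c, d)) = Some (1, c, d + k).
  elim => [|k IH] c d; first by rewrite addn0.
  by rewrite iterS IH step_1 addnS.
have H2 : forall k c d, iter k (fun q => step q (lt2 a false true)) (Some (2, c, d)) = Some (2, c, d + k).
  elim => [|k IH] c d; first by rewrite addn0.
  by rewrite iterS IH step_2 addnS.
rewrite H0 add0n /code. case: (ltngtP m n) => H.
- have -> : m - n = 0 by lia. rewrite /=.
  have -> : n - m = (n - m - 1).+1 by lia. rewrite iterSr step_0a H2.
  congr (Some (_, _, _)); lia.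
- have -> : n - m = 0 by lia. rewrite /=.
  have -> : m - n = (m - n - 1).+1 by lia. rewrite iterSr step_a0 H1.
  congr (Some (_, _, _)); lia.
- by rewrite H subnn /=.
Qed.

Lemma rcons_nseq (T : Type) (x : T) c : rcons (nseq c x) x = nseq c.+1 x.
Proof. by elim: c => //= c ->. Qed.

Lemma pstate_shape (A : finType) (a : A) (HA : forall x : A, x = a) u ph c d :
  pstate u = Some (ph, c, d) ->
  [\/ [/\ ph = 0, d = 0 & u = nseq c (lt2 a true true)],
      [/\ ph = 1, 0 < d & u = nseq c (lt2 a true true) ++ nseq d (lt2 a true false)]
    | [/\ ph = 2, 0 < d & u = nseq c (lt2 a true true) ++ nseq d (lt2 a false true)]].
Proof.
elim/last_ind: u ph c d => [|u l IH] ph c d.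
  by rewrite /pstate /= => -[<- <- <-]; apply: Or31.
rewrite /pstate foldl_rcons -/(pstate u).
have [b0 [b1 ->]] := letter_ex HA l.
case E: (pstate u) => [[[ph' c'] d']|]; last by [].
have := IH _ _ _ E.
case=> [[-> -> ->]|[-> Hd ->]|[-> Hd ->]]; case: b0; case: b1; rewrite /step /lapp !ffunE //= => -[<- <- <-].
- by apply: Or31; rewrite rcons_nseq.
- by apply: Or32; rewrite -cats1.
- by apply: Or33; rewrite -cats1.
- by apply: Or32; rewrite rcons_cat rcons_nseq.
- by apply: Or33; rewrite rcons_cat rcons_nseq.
Qed.

Lemma pstate_inv (A : finType) (a : A) (HA : forall x : A, x = a) u t :
  pstate u = Some t -> u = conv2 a (mn t).1 (mn t).2 /\ t = code (mn t).1 (mn t).2.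
Proof.
case: t => [[ph c] d] E. have [[-> -> Eu]|[-> Hd Eu]|[-> Hd Eu]] := pstate_shape HA E; rewrite /mn /=.
- split; first by rewrite Eu conv2E /wmn minnn subnn /= cats0.
  by rewrite /code eqxx.
- split.
    rewrite Eu conv2E /wmn. have -> : minn (c + d) c = c by lia.
    have -> : c - (c + d) = 0 by lia. by rewrite addKn cats0.
  rewrite /code. have -> : (c + d == c) = false by lia. have -> : c < c + d by lia.
  by rewrite addKn.
- split.
    rewrite Eu conv2E /wmn. have -> : minn c (c + d) = c by lia.
    have -> : c - (c + d) = 0 by lia. by rewrite addKn.
  rewrite /code. have -> : (c == c + d) = false by lia. have -> : (c + d < c) = false by lia.
  by rewrite addKn.
Qed.



Lemma seq_unary (A : finType) (a : A) (HA : forall x : A, x = a) (w : seq A) : w = nseq (size w) a.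
Proof. elim: w => //= x w IH. by rewrite (HA x) {1}IH. Qed.

Lemma tuple2_eta (T : Type) (t : 2.-tuple T) : t = [tuple tnth t ord0; tnth t o1].
Proof.
apply: eq_from_tnth => i. case: i => [[|[|//]] Hi]; rewrite [RHS](tnth_nth (tnth t ord0)) /=;
  congr tnth; exact: val_inj.
Qed.

Lemma map_tuple2 (T U : Type) (f : T -> U) x y : map_tuple f [tuple x; y] = [tuple f x; f y].
Proof. by apply: val_inj. Qed.

Lemma lang_char (A : finType) (a : A) (HA : forall x : A, x = a) (S : Type) (phi : seq A -> S)
  (Rel : 2.-tuple S -> Prop) u :
  (exists ws, Lambda (fun _ => True) phi Rel ws /\ u = conv ws) <->
  exists m n, u = conv2 a m n /\ Rel [tuple phi (nseq m a); phi (nseq n a)].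
Proof.
split.
- move=> [ws [[_ HR] ->]]. exists (size (tnth ws ord0)), (size (tnth ws o1)).
  have Ews : ws = [tuple nseq (size (tnth ws ord0)) a; nseq (size (tnth ws o1)) a].
    by rewrite {1}(tuple2_eta ws) -!seq_unary.
  split; first by rewrite /conv2 -Ews.
  by rewrite -map_tuple2 -Ews.
- move=> [m [n [-> HR]]]. exists [tuple nseq m a; nseq n a]; split => //.
  by split => //; rewrite map_tuple2.
Qed.

Lemma MN (Sig F : finType) (code0 : seq Sig -> F) (L : seq Sig -> Prop) :
  (forall w w', code0 w = code0 w' -> forall v, L (w ++ v) <-> L (w' ++ v)) -> regular_lang L.
Proof.
move=> Hc.
pose rep := fun q : F => epsilon (inhabits [::]) (fun w => code0 w = q).
pose fin := fun q : F => if excluded_middle_informative (L (rep q)) then true else false.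
pose tr := fun q l => code0 (rep q ++ [:: l]).
exists (DFA (code0 [::]) fin tr).
have inv : forall w, exists w', code0 w' = foldl tr (code0 [::]) w /\ forall v, L (w' ++ v) <-> L (w ++ v).
  elim/last_ind => [|w l [w' [E1 E2]]]; first by exists [::].
  rewrite foldl_rcons. set q := foldl tr (code0 [::]) w in E1 *.
  have Hrep : code0 (rep q) = q := epsilon_spec (inhabits [::]) (fun w => code0 w = q) (ex_intro _ w' E1).
  exists (rep q ++ [:: l]); split => // v.
  rewrite -catA /= cat_rcons -E2. apply: Hc. by rewrite Hrep E1.
move=> w; rewrite /dfa_accepts /=. have [w' [E1 E2]] := inv w.
set q := foldl tr (code0 [::]) w in E1 *.
have Hrep : code0 (rep q) = q := epsilon_spec (inhabits [::]) (fun w => code0 w = q) (ex_intro _ w' E1).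
have EE : L (rep q) <-> L w.
  have := Hc (rep q) w' (etrans Hrep (esym E1)) [::]. have := E2 [::]. rewrite !cats0.
  by move=> A1 A2; rewrite A2.
rewrite /fin. case: excluded_middle_informative => H.
- by split => // _; apply/EE.
- split => // H'. exfalso; apply: H; exact/EE.
Qed.


Definition rd T0 P0 z := if z < T0 then z else T0 + (z - T0) %% P0.
Definition nxt T0 P0 r := if r.+1 < T0 + P0 then r.+1 else T0.

Lemma rd_S T0 P0 z : 0 < P0 -> rd T0 P0 z.+1 = nxt T0 P0 (rd T0 P0 z).
Proof.
move=> Hp. rewrite /rd /nxt. case: (ltnP z.+1 T0) => H1.
  have -> : z < T0 by lia. have -> : z.+1 < T0 + P0 by lia. done.
case: (ltnP z T0) => H2.
  have Ez : z = T0.-1 by lia. have -> : z.+1 - T0 = 0 by lia. rewrite mod0n addn0.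
  have -> : z.+1 < T0 + P0 by lia. lia.
have -> : z.+1 - T0 = (z - T0).+1 by lia.
rewrite modnS. have Hm := ltn_pmod (z - T0) Hp.
case: ifP => Hd.
  have : (z - T0) %% P0 = P0.-1.
    have := modnS (z - T0) P0; rewrite Hd => E. 
    move/dvdnP: Hd => [q Hq]. have E2 := divn_eq (z - T0) P0.
    have : (z - T0) = q.-1 * P0 + P0.-1.
      case: q Hq => [|q] Hq; first lia. rewrite mulSn in Hq. rewrite /=. clear E E2. lia.
    move=> Eq. rewrite Eq modnMDl modn_small //. lia.
  move=> ->. have -> : (T0 + P0.-1).+1 < T0 + P0 = false by lia. by rewrite addn0.
have Hlt : ((z - T0) %% P0).+1 < P0.
  case: (ltngtP ((z - T0) %% P0).+1 P0) => // E; first lia.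
  exfalso. move: Hd. have : P0 %| (z - T0).+1.
    rewrite (divn_eq (z - T0) P0) -addnS E. by rewrite dvdn_add ?dvdn_mull.
  by move=> ->.
have -> : (T0 + (z - T0) %% P0).+1 < T0 + P0 by lia. by rewrite addnS.
Qed.

Definition red T0 P0 (s : option (nat * nat * nat)) : option (nat * nat * nat) :=
  match s with Some (ph, c, d) => Some (ph, rd T0 P0 c, rd T0 P0 d) | None => None end.

Definition stepR (A : finType) T0 P0 (s : option (nat * nat * nat)) (l : conv_alph A 2) : option (nat * nat * nat) :=
  let b0 := lapp l ord0 != None in let b1 := lapp l o1 != None in
  match s with
  | Some (0, c, _) => if b0 && b1 then Some (0, nxt T0 P0 c, rd T0 P0 0) else if b0 then Some (1, c, rd T0 P0 1)
                      else if b1 then Some (2, c, rd T0 P0 1) else None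
  | Some (1, c, d) => if b0 && ~~ b1 then Some (1, c, nxt T0 P0 d) else None
  | Some (2, c, d) => if ~~ b0 && b1 then Some (2, c, nxt T0 P0 d) else None
  | _ => None
  end.

Lemma red_step (A : finType) T0 P0 s (l : conv_alph A 2) : 0 < P0 ->
  red T0 P0 (step s l) = stepR T0 P0 (red T0 P0 s) l.
Proof.
move=> Hp. case: s => [[[ph c] d]|] //. rewrite /step /stepR /=.
case: ph => [|[|[|ph]]] //=; case: (lapp l ord0 != None); case: (lapp l o1 != None); by rewrite //= ?rd_S.
Qed.

Lemma red_foldl (A : finType) T0 P0 (v : seq (conv_alph A 2)) s s' : 0 < P0 ->
  red T0 P0 s = red T0 P0 s' -> red T0 P0 (foldl (@step A) s v) = red T0 P0 (foldl (@step A) s' v).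
Proof.
move=> Hp. elim: v s s' => [|l v IH] s s' E //=. apply: IH. by rewrite !red_step // E.
Qed.

Lemma rd_dec T0 P0 x : 0 < P0 -> T0 <= x -> T0 <= rd T0 P0 x /\ x = rd T0 P0 x + ((x - T0) %/ P0) * P0.
Proof.
move=> Hp Hx. rewrite /rd. have -> : x < T0 = false by lia. split; first lia.
have := divn_eq (x - T0) P0. lia.
Qed.

Lemma rd_lt T0 P0 x : 0 < P0 -> rd T0 P0 x < T0 + P0.
Proof. move=> Hp. rewrite /rd. case: ifP => H; first lia. have := ltn_pmod (x - T0) Hp. lia. Qed.

Lemma rd0 T0 P0 : rd T0 P0 0 = 0.
Proof. rewrite /rd. case: ifP => //. by rewrite sub0n mod0n; lia. Qed.

Lemma good_rd2 (X : nat -> nat -> Prop) T0 P0 : 0 < P0 -> good X T0 P0 -> forall x d,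
  X x (x + d) <-> X (rd T0 P0 x) (rd T0 P0 x + rd T0 P0 d).
Proof.
move=> Hp G x d.
have S1 : X x (x + d) <-> X (rd T0 P0 x) (rd T0 P0 x + d).
  case: (ltnP x T0) => Hx; first by rewrite /rd Hx.
  have [h1 h2] := rd_dec Hp Hx. set r := rd T0 P0 x in h1 h2 *.
  rewrite (good_iter_a G ((x - T0) %/ P0) (x := r) (y := r + d)) //; last lia.
  rewrite -h2. have -> : r + d + (x - T0) %/ P0 * P0 = x + d by lia. done.
rewrite S1. set y := rd T0 P0 x.
case: (ltnP d T0) => Hd; first by rewrite /rd Hd.
have [h1 h2] := rd_dec Hp Hd. set r := rd T0 P0 d in h1 h2 *.
rewrite (good_iter_b G ((d - T0) %/ P0) (x := y) (y := y + r)); last lia.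
have -> : y + r + (d - T0) %/ P0 * P0 = y + d by lia. done.
Qed.

Lemma good_rd3 (X : nat -> nat -> Prop) T0 P0 : 0 < P0 -> good X T0 P0 -> forall x d,
  X (x + d) x <-> X (rd T0 P0 x + rd T0 P0 d) (rd T0 P0 x).
Proof.
move=> Hp G x d.
have S1 : X (x + d) x <-> X (rd T0 P0 x + d) (rd T0 P0 x).
  case: (ltnP x T0) => Hx; first by rewrite /rd Hx.
  have [h1 h2] := rd_dec Hp Hx. set r := rd T0 P0 x in h1 h2 *.
  rewrite (good_iter_a G ((x - T0) %/ P0) (x := r + d) (y := r)) //; last lia.
  rewrite -h2. have -> : r + d + (x - T0) %/ P0 * P0 = x + d by lia. done.
rewrite S1. set y := rd T0 P0 x.
case: (ltnP d T0) => Hd; first by rewrite /rd Hd.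
have [h1 h2] := rd_dec Hp Hd. set r := rd T0 P0 d in h1 h2 *.
rewrite (good_iter_c G ((d - T0) %/ P0) (x := y + r) (y := y)); last lia.
have -> : y + r + (d - T0) %/ P0 * P0 = y + d by lia. done.
Qed.

Definition accX (X : nat -> nat -> Prop) (s : option (nat * nat * nat)) : Prop :=
  match s with Some t => X (mn t).1 (mn t).2 | None => False end.

Lemma acc_red (X : nat -> nat -> Prop) T0 P0 s s' : 0 < P0 -> good X T0 P0 ->
  red T0 P0 s = red T0 P0 s' -> (accX X s <-> accX X s').
Proof.
move=> Hp G. have key : forall ph c d, accX X (Some (ph, c, d)) <-> accX X (Some (ph, rd T0 P0 c, rd T0 P0 d)).
  move=> ph c d. rewrite /accX /mn.
  case: ifP => _.
    have := good_rd2 Hp G c 0. rewrite addn0 rd0 addn0 => E. exact: E.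
  case: ifP => _ /=.
  - exact: good_rd3.
  - exact: good_rd2.
case: s => [[[ph c] d]|]; case: s' => [[[ph' c'] d']|] => E; try discriminate E; last done.
rewrite (key ph c d) (key ph' c' d'). by case: E => -> -> ->.
Qed.

Lemma code_ph m n : (code m n).1.1 < 3.
Proof. rewrite /code. by case: ifP => //; case: ifP. Qed.

Lemma good_regular (A : finType) (a : A) (HA : forall x : A, x = a) (S : Type) (phi : seq A -> S)
  (Rel : 2.-tuple S -> Prop) T0 P0 : 0 < P0 ->
  good (fun m n => Rel [tuple phi (nseq m a); phi (nseq n a)]) T0 P0 ->
  regular_rel (Lambda (fun _ => True) phi Rel).
Proof.
move=> Hp G. set X := fun m n => Rel [tuple phi (nseq m a); phi (nseq n a)].
rewrite /regular_rel.
pose B := T0 + P0.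
pose enc := fun s : option (nat * nat * nat) => match s with
  | Some (ph, c, d) => Some ((inord ph : 'I_3), (inord c : 'I_B.+1), (inord d : 'I_B.+1))
  | None => None end.
apply: (@MN _ _ (fun w => enc (red T0 P0 (pstate w)))).
have L : forall u, (exists ws, Lambda (fun _ => True) phi Rel ws /\ u = conv ws) <-> accX X (pstate u).
  move=> u; rewrite (lang_char HA). split.
  - move=> [m [n [-> HX]]]. by rewrite pstate_conv2 /accX mn_code.
  - case E': (pstate u) => [t|] //= HX. have [Eu _] := pstate_inv HA E'. by exists (mn t).1, (mn t).2.
have bounds : forall (u : seq (conv_alph A 2)) ph c d, red T0 P0 (pstate u) = Some (ph, c, d) -> [/\ ph < 3, c < B.+1 & d < B.+1].
  move=> u ph c d. case E: (pstate u) => [[[ph' c'] d']|] //= [<- <- <-].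
  have [_ Ec] := pstate_inv HA E. have := code_ph (mn (ph', c', d')).1 (mn (ph', c', d')).2.
  rewrite -Ec /= => Hph. split => //; apply: ltnW; exact: rd_lt.
move=> w w' E v. rewrite !L.
have Er : red T0 P0 (pstate w) = red T0 P0 (pstate w').
  move: E. case E1: (red T0 P0 (pstate w)) => [[[p1 c1] d1]|];
    case E2: (red T0 P0 (pstate w')) => [[[p2 c2] d2]|] //=.
  have [h1 h2 h3] := bounds _ _ _ _ E1. have [h4 h5 h6] := bounds _ _ _ _ E2.
  case=> e1 e2 e3.
  have := congr1 (@nat_of_ord _) e1. have := congr1 (@nat_of_ord _) e2. have := congr1 (@nat_of_ord _) e3.
  rewrite !inordK // => -> -> ->. done.
rewrite /pstate !foldl_cat. apply: acc_red; [exact: Hp|exact: G|]. apply: red_foldl => //.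
Qed.


Lemma good_ext (X Y : nat -> nat -> Prop) T P : (forall m n, X m n <-> Y m n) -> good X T P -> good Y T P.
Proof.
move=> E [Ha Hb Hc]; split => x y *; rewrite -!E; [exact: Ha|exact: Hb|exact: Hc].
Qed.

Lemma dfa_iter_good (Q : finType) (g1 g2 g3 : Q -> Q) s0 (fin : pred Q) :
  good (fun m n => fin (iter (n - m) g3 (iter (m - n) g2 (iter (minn m n) g1 s0)))) #|Q| (#|Q|`!).
Proof.
set P := #|Q|`!. split.
- move=> x y Hx Hy. have -> : y + P - (x + P) = y - x by lia. have -> : x + P - (y + P) = x - y by lia.
  have -> : minn (x + P) (y + P) = minn x y + P by lia. rewrite iter_period //. lia.
- move=> x y Hxy. have -> : minn x (y + P) = minn x y by lia. have -> : x - (y + P) = x - y by lia.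
  have -> : y + P - x = (y - x) + P by lia. rewrite iter_period //. lia.
- move=> x y Hxy. have -> : minn (x + P) y = minn x y by lia. have -> : y - (x + P) = y - x by lia.
  have -> : x + P - y = (x - y) + P by lia. rewrite [iter (x - y + P) _ _]iter_period //. lia.
Qed.

Lemma conv2_inj (A : finType) (a : A) m n m' n' : conv2 a m n = conv2 a m' n' -> m = m' /\ n = n'.
Proof.
move=> E. have := pstate_conv2 a m n. rewrite E pstate_conv2 => -[E'].
have := mn_code m n. rewrite -E' mn_code. by case.
Qed.

Lemma dfa_good (A : finType) (a : A) (HA : forall x : A, x = a) (S : Type) (phi : seq A -> S)
  (r : nat) (e : r = 2) (Rel : r.-tuple S -> Prop) :
  regular_rel (Lambda (fun _ => True) phi Rel) ->
  exists T P, 0 < P /\ good (fun m n => Rel (tcast (esym e) [tuple phi (nseq m a); phi (nseq n a)])) T P.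
Proof.
subst r. case=> M HM. exists #|dfa_state M|, (#|dfa_state M|`!); split; first exact: fact_gt0.
apply: (good_ext _ (dfa_iter_good (fun q => @dfa_trans _ M q (lt2 a true true))
   (fun q => @dfa_trans _ M q (lt2 a true false))
   (fun q => @dfa_trans _ M q (lt2 a false true)) (@dfa_start _ M) (@dfa_final _ M))).
move=> m n /=. rewrite ?tcast_id.
have H1 := HM (conv2 a m n). rewrite (lang_char HA) in H1.
have H2 : dfa_accepts M (conv2 a m n) = @dfa_final _ M (iter (n - m) (fun q => @dfa_trans _ M q (lt2 a false true))
   (iter (m - n) (fun q => @dfa_trans _ M q (lt2 a true false))
   (iter (minn m n) (fun q => @dfa_trans _ M q (lt2 a true true)) (@dfa_start _ M)))).
  by rewrite /dfa_accepts conv2E /wmn !foldl_cat !foldl_nseq.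
rewrite -H2 -H1.
split => [[m' [n' [E HR]]]|HR]; last by exists m, n.
have [-> ->] := conv2_inj E. done.
Qed.


Lemma tnth2_0 (T : Type) (x y : T) : tnth [tuple x; y] ord0 = x.
Proof. by rewrite (tnth_nth x). Qed.
Lemma tnth2_1 (T : Type) (x y : T) : tnth [tuple x; y] (@Ordinal 2 1 isT) = y.
Proof. by rewrite (tnth_nth x). Qed.

Lemma transport (A : finType) (a : A) (HA : forall x : A, x = a) (S : Type) (phi : seq A -> S)
  (Hinj : injective phi) (Hsurj : forall s : S, exists w, True /\ phi w = s) (B : S -> S -> Prop) m n :
  Qr (fun m n => B (phi (nseq m a)) (phi (nseq n a))) m n <-> clos_refl_trans S B (phi (nseq m a)) (phi (nseq n a)).
Proof.
split.
- elim => [x y H|x|x y z _ IH1 _ IH2]; [exact: rt_step|exact: rt_refl|exact: rt_trans IH1 IH2].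
- move=> H. have : forall s t, clos_refl_trans S B s t -> forall m n, s = phi (nseq m a) -> t = phi (nseq n a) ->
      Qr (fun m n => B (phi (nseq m a)) (phi (nseq n a))) m n.
    move=> s t /clos_rt_rt1n_iff. elim => [x|x y z Hxy _ IH] m0 n0 E1 E2.
    + rewrite E1 in E2. have := Hinj _ _ E2 => /(congr1 size). rewrite !size_nseq => ->. exact: rt_refl.
    + have [w [_ Ew]] := Hsurj y. rewrite (seq_unary HA w) in Ew.
      apply: rt_trans (rt_step _ _ _ (size w) _) (IH _ _ (esym Ew) E2). by rewrite -E1 Ew.
  by move/(_ _ _ H m n erefl erefl).
Qed.

Theorem theorem4p1 (sig : signature) (S : Type) (rels : relstruct sig S)
  (A : finType) (phi : seq A -> S)
  (Hpres : injective_unary_FA_presentation rels phi)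
  (i : sym sig) (e : arity i = 2) :
  regular_rel (Lambda (fun _ : seq A => True) phi (rt_rel2 (binrel rels e)))
  /\ unary_FA_presentable (aug_struct rels (rt_rel2 (binrel rels e))).
Proof.
case: Hpres => HA1 [Hreg Hsurj Heq Hrels] Hinj.
have : #|A| == 1 by rewrite HA1.
case/card1P => a Ha. have HA : forall x : A, x = a by move=> x; have := Ha x; rewrite !inE => /esym/eqP.
have [T [P [HP GR]]] := dfa_good HA e (Hrels i).
have [T0 [P0 [HP0 GQ]]] := Q_good HP GR.
have GQ' : good (fun m n => rt_rel2 (binrel rels e) [tuple phi (nseq m a); phi (nseq n a)]) T0 P0.
  apply: good_ext GQ => m n. rewrite /rt_rel2 tnth2_0 tnth2_1.
  exact: (transport HA Hinj Hsurj (binrel rels e)).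
have R1 := good_regular HA HP0 GQ'.
split => //.
exists A, (fun _ => True), phi; split => //; split => //.
by case=> [i'|] /=; [exact: Hrels | exact: R1].
Qed.
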